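(* Let $\Sigma$ be a finite alphabet. For any $L \subseteq \Sigma^*$ and $n \ge 0$, the language $L_n = \{w \in \Sigma^* : \mathrm{last}_n(w) \in L\}$ is $(2^{F_L(n)+1}-1)$-suffix testable.
   Context: Fix $a\in\Sigma$; $\mathrm{last}_n(a_1\cdots a_m)=a_{m-n+1}\cdots a_m$ if $n\le m$, else $a^{n-m}a_1\cdots a_m$. A fixed-size sliding window algorithm for $L$ is a sequence $(\mathcal{A}_n)_{n\ge0}$ of deterministic (possibly infinite-state) automata with injective encodings of their states into bit strings, $\mathcal{A}_n$ accepting $L_n$; its space complexity at $n$ is the maximal encoding length of a state of $\mathcal{A}_n$. $F_L(n)$ is the minimal space complexity at $n$ over all such algorithms. A language $K$ is $k$-suffix testable if for all $x,y\in\Sigma^*$ and $z\in\Sigma^k$: $xz\in K\iff yz\in K$. *)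

(* Defs.v *)
From Stdlib Require Import ClassicalEpsilon.
From mathcomp Require Import all_boot.
From mathcomp Require Import zify.

Set Implicit Arguments.
Unset Strict Implicit.
Unset Printing Implicit Defensive.

Section SlidingWindow.
Variable Sigma : finType.
Variable a : Sigma.

Definition last_n (n : nat) (w : seq Sigma) : seq Sigma :=
  if n <= size w then drop (size w - n) w else nseq (n - size w) a ++ w.

Definition Ln (L : seq Sigma -> Prop) (n : nat) : seq Sigma -> Prop :=
  fun w => L (last_n n w).

(* A deterministic (possibly infinite-state) automaton over Sigma, together
   with an injective encoding of its states into bit strings. *)
Record dfa := DFA {
  state : Type;
  init : state;
  delta : state -> Sigma -> state;
  final : state -> Prop;
  enc : state -> seq bool;
  enc_inj : injective enc }.

Definition run (A : dfa) (w : seq Sigma) : state A := foldl (@delta A) (@init A) w.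
Definition accepts (A : dfa) (w : seq Sigma) : Prop := final (run A w).

Definition sliding_window_algorithm (L : seq Sigma -> Prop) (A : nat -> dfa) : Prop :=
  forall n w, accepts (A n) w <-> Ln L n w.

Definition space_le (A : dfa) (k : nat) : Prop :=
  forall q : state A, size (enc q) <= k.

Definition F_bounded (L : seq Sigma -> Prop) (n k : nat) : Prop :=
  exists A : nat -> dfa, sliding_window_algorithm L A /\ space_le (A n) k.

Lemma last_n_rcons n w c :
  last_n n (rcons w c) = behead (rcons (last_n n w) c).
Proof.
rewrite /last_n size_rcons.
case: (leqP n (size w)) => Hn.
  rewrite (leq_trans Hn (leqnSn _)) subSn //.
  by rewrite -add1n -drop_drop drop1 drop_rcons // leq_subr.
case: (ltnP (size w).+1 n) => Hn2.
  have -> : n - size w = (n - (size w).+1).+1 by lia.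
  by rewrite /= rcons_cat.
have -> : n = (size w).+1 by lia.
by rewrite subnn drop0 subSn // subnn.
Qed.

Lemma size_last_n n w : size (last_n n w) = n.
Proof.
rewrite /last_n; case: leqP => H.
  by rewrite size_drop; lia.
by rewrite size_cat size_nseq; lia.
Qed.

Section Witness.
Variable L : seq Sigma -> Prop.
Variable m : nat.

Definition wstate := m.-tuple Sigma.

Lemma size_wdelta (t : wstate) c : size (behead (rcons t c)) == m.
Proof. by rewrite size_behead size_rcons size_tuple. Qed.

Definition wdelta (t : wstate) (c : Sigma) : wstate := Tuple (size_wdelta t c).

Lemma size_winit : size (nseq m a) == m.
Proof. by rewrite size_nseq. Qed.

Definition wenc (t : wstate) : seq bool := [seq x == t | x <- enum {: m.-tuple Sigma}].

Lemma wenc_inj : injective wenc.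
Proof.
move=> t u /eq_in_map H.
by apply/eqP; rewrite -(H t) ?eqxx // mem_enum.
Qed.

Definition wdfa : dfa :=
  @DFA wstate (Tuple size_winit) wdelta (fun t => L t) wenc wenc_inj.

Lemma wrun w : val (run wdfa w) = last_n m w.
Proof.
elim/last_ind: w => [|w c IH].
  rewrite /run /= /last_n /=.
  by case: m => [|k] //=; rewrite cats0.
by rewrite /run foldl_rcons /= -/(run wdfa w) IH last_n_rcons.
Qed.

Lemma wspace : space_le wdfa #|{: m.-tuple Sigma}|.
Proof. by move=> q; rewrite /= /wenc size_map -cardE. Qed.
End Witness.

Lemma F_bounded_ex L n : exists k, F_bounded L n k.
Proof.
exists #|{: n.-tuple Sigma}|; exists (fun m => wdfa L m); split.
  by move=> m w; rewrite /accepts /Ln /= -(wrun L).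
exact: wspace.
Qed.

Definition F_boundedb L n k : bool :=
  if excluded_middle_informative (F_bounded L n k) then true else false.

Lemma F_boundedb_ex L n : exists k, F_boundedb L n k.
Proof.
have [k Hk] := F_bounded_ex L n; exists k.
by rewrite /F_boundedb; case: excluded_middle_informative.
Qed.

Definition F_L (L : seq Sigma -> Prop) (n : nat) : nat := ex_minn (F_boundedb_ex L n).

Definition suffix_testable (K : seq Sigma -> Prop) (k : nat) : Prop :=
  forall x y z : seq Sigma, size z = k -> (K (x ++ z) <-> K (y ++ z)).

End SlidingWindow.

(* Main.v *)
Require Import Defs.
From mathcomp Require Import all_boot.
From Stdlib Require Import ClassicalEpsilon Classical.
From mathcomp Require Import zify.

Set Implicit Arguments.
Unset Strict Implicit.
Unset Printing Implicit Defensive.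

Fixpoint code (s : seq bool) : nat :=
  match s with [::] => 1 | b :: s' => b + (code s').*2 end.

Lemma code_pos s : 0 < code s.
Proof. elim: s => //= b s IH; case: b => /=; lia. Qed.

Lemma code_lt s : code s < 2 ^ (size s).+1.
Proof.
elim: s => //= b s IH; rewrite expnS.
have := code_pos s; case: b => /=; lia.
Qed.

Lemma code_inj : injective code.
Proof.
elim=> [|b1 s1 IH] [|b2 s2] //=.
- by have := code_pos s2; case: b2 => /=; lia.
- by have := code_pos s1; case: b1 => /=; lia.
move=> H.
have Hb : b1 = b2 by case: b1 b2 H => [] [] /=; lia.
subst b2; congr (_ :: _); apply: IH; case: b1 H => /=; lia.
Qed.

Section Proof.
Variables (Sigma : finType) (a : Sigma) (L : seq Sigma -> Prop) (n : nat).

Definition eqv j (u v : seq Sigma) :=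
  forall w, j <= size w -> (Ln a L n (u ++ w) <-> Ln a L n (v ++ w)).

Lemma eqv_mono j j' u v : j <= j' -> eqv j u v -> eqv j' u v.
Proof. by move=> H E w Hw; apply: E; apply: leq_trans Hw. Qed.

Lemma eqv_sym j u v : eqv j u v -> eqv j v u.
Proof. by move=> E w Hw; split => H; apply/(E w Hw). Qed.

Lemma eqv_trans j u v t : eqv j u v -> eqv j v t -> eqv j u t.
Proof. move=> E1 E2 w Hw; rewrite (E1 w Hw); exact: E2. Qed.

Lemma eqv_S j u v : eqv j.+1 u v <-> forall c, eqv j (rcons u c) (rcons v c).
Proof.
split.
  move=> E c w Hw; rewrite -!cats1 -!catA /=; apply: E => /=; lia.
move=> E [|c w] //= Hw.
have := E c w Hw; by rewrite -!cats1 -!catA.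
Qed.

Lemma last_n_cat u w : n <= size w -> last_n a n (u ++ w) = last_n a n w.
Proof.
move=> H; rewrite /last_n size_cat H (leq_trans H (leq_addl _ _)).
rewrite drop_cat; case: ltnP => H2; first lia.
congr drop; lia.
Qed.

Lemma eqv_big j u v : n <= j -> eqv j u v.
Proof.
move=> H w Hw; rewrite /Ln !last_n_cat //; exact: leq_trans Hw.
Qed.

Lemma eqv_stable j : (forall u v, eqv j.+1 u v -> eqv j u v) ->
  forall i u v, eqv (i + j) u v -> eqv j u v.
Proof.
move=> H.
have C : forall i u v, eqv (i + j).+1 u v -> eqv (i + j) u v.
  elim=> [|i IH] u v //=; first exact: H.
  move=> /eqv_S E; rewrite addSn; apply/eqv_S => c; apply: IH; exact: E.
elim=> [|i IH] u v //= E; apply: IH; apply: C; by rewrite -addSn.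
Qed.

Lemma strict j N x y : j < N -> ~ eqv N x y ->
  exists u v, eqv j.+1 u v /\ ~ eqv j u v.
Proof.
move=> HjN Hxy; apply: NNPP => Hne; apply: Hxy.
have H : forall u v, eqv j.+1 u v -> eqv j u v.
  move=> u v E; apply: NNPP => E2; apply: Hne; by exists u, v.
apply: (eqv_mono (ltnW HjN)); apply: (eqv_stable H (i:=n)); apply: eqv_big; lia.
Qed.

Definition neqvb j u v : bool :=
  if excluded_middle_informative (eqv j u v) then false else true.

Lemma neqvbP j u v : reflect (~ eqv j u v) (neqvb j u v).
Proof. rewrite /neqvb; case: excluded_middle_informative => H; constructor => //. Qed.

Lemma count_le1 j u S : pairwise (neqvb j) S ->
  count (fun s => ~~ neqvb j s u) S <= 1.
Proof.
elim: S => //= s S IH /andP [Hall Hpw].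
case: (neqvbP j s u) => /= Hs; first by rewrite add0n; apply: IH.
move/NNPP: Hs => Hs.
suff -> : count (fun s0 => ~~ neqvb j s0 u) S = 0 by [].
apply/eqP; rewrite -leqn0 leqNgt -has_count; apply/hasP => [[t Ht]].
move/negPn/neqvbP => Htu.
move/allP: Hall => /(_ t Ht) /neqvbP; apply.
apply: (eqv_trans Hs); apply: eqv_sym.
exact: NNPP.
Qed.

Lemma levels N x y : ~ eqv N x y -> forall d, d <= N ->
  exists S, pairwise (neqvb (N - d)) S /\ d + 2 <= size S.
Proof.
move=> Hxy; elim=> [|d IH] Hd.
  exists [:: x; y]; rewrite subn0 /= andbT; split => //.
  by apply/andP; split => //; apply/neqvbP.
have [S [Hpw Hsz]] := IH (ltnW Hd).
have E : N - d = (N - d.+1).+1 by lia.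
rewrite E in Hpw; set j := N - d.+1 in Hpw *.
have [u [v [Huv Hnuv]]] := strict (j:=j) (N:=N) ltac:(lia) Hxy.
set F := [seq s <- S | neqvb j.+1 s u].
exists [:: u, v & F]; split.
  rewrite /= -!andbA; apply/and4P; split.
    by apply/neqvbP.
  - apply/allP => s; rewrite mem_filter => /andP [/neqvbP Hs _].
    apply/neqvbP => E2; apply: Hs; apply: eqv_sym; exact: eqv_mono E2.
  - apply/allP => s; rewrite mem_filter => /andP [/neqvbP Hs _].
    apply/neqvbP => E2; apply: Hs; apply: eqv_sym.
    apply: (eqv_trans Huv); exact: eqv_mono E2.
  - apply: pairwise_filter; apply: sub_pairwise Hpw => s t /neqvbP H.
    apply/neqvbP => E2; apply: H; exact: eqv_mono E2.
have := count_le1 u Hpw.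
have := count_predC (fun s => neqvb j.+1 s u) S.
rewrite /= size_filter.
have -> : count (predC (fun s => neqvb j.+1 s u)) S =
          count (fun s => ~~ neqvb j.+1 s u) S by [].
lia.
Qed.

End Proof.

Theorem theorem6p3 (Sigma : finType) (a : Sigma) (L : seq Sigma -> Prop) (n : nat) :
  suffix_testable (Ln a L n) (2 ^ (F_L a L n).+1 - 1).
Proof.
rewrite /F_L; case: ex_minnP => k Hk _.
move: Hk; rewrite /F_boundedb; case: excluded_middle_informative => // [[A [HA Hsp]]] _.
set N := 2 ^ k.+1 - 1.
move=> x y z Hz.
suff Hxy : eqv a L n N x y by apply: Hxy; rewrite Hz.
apply: NNPP => Hxy.
have [S [Hpw Hsz]] := levels Hxy (leqnn N).
rewrite subnn in Hpw.
set g := fun u => code (enc (run (A n) u)).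
have Hg : forall s1 s2, g s1 = g s2 -> eqv a L n 0 s1 s2.
  move=> s1 s2 /code_inj /enc_inj Hr w _.
  rewrite -!(HA n) /accepts /run !foldl_cat.
  by rewrite -/(run (A n) s1) -/(run (A n) s2) Hr.
have Hu : uniq (map g S).
  elim: S Hpw {Hsz} => //= s S IH /andP [Hall Hpw].
  rewrite IH // andbT; apply/mapP => [[t Ht /Hg Hst]].
  by move/allP: Hall => /(_ t Ht) /neqvbP.
have Hsub : {subset map g S <= iota 0 (2 ^ k.+1)}.
  move=> i /mapP [s _ ->]; rewrite mem_iota /= add0n.
  apply: leq_trans (code_lt _) _; apply: leq_pexp2l => //; exact: Hsp.
have := uniq_leq_size Hu Hsub; rewrite size_map size_iota.
have : 0 < 2 ^ k.+1 by rewrite expn_gt0.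
rewrite /N in Hsz; lia.
Qed.
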